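(* In the setting of the context, assume $H=\mathsf{Exp}(\alpha)$ with density $h(x)=\alpha\mathrm e^{-\alpha x}$, $G=\mathsf{Exp}(\beta)$ with density $g(y)=\beta\mathrm e^{-\beta y}$ ($\alpha,\beta>0$), and $J=\mathsf{Gamma}(\gamma,\eta)$ with density $j(\xi)=\frac{\gamma^\eta\xi^{\eta-1}\mathrm e^{-\gamma\xi}}{(\eta-1)!}$ ($\gamma>0$, $\eta\ge1$), with $\nu\in(-\gamma,0)$. Then under $\mathbb P^*$, in the variables $\tilde\lambda=c(t)\lambda$ with $c(t)=\theta(1+\nu/\gamma)^{-\eta}\frac{\beta}{\beta-B(t)}$, the process is a dynamic contagion process with transformed parameters $$a\to\theta\Big(1+\frac{\nu}{\gamma}\Big)^{-\eta}\frac{\beta}{\beta-B(t)}\,a,\qquad \rho\to\psi\frac{\alpha}{\alpha-B(t)}\rho,$$ $$J:\ \mathsf{Gamma}(\gamma,\eta)\to\mathsf{Gamma}(\gamma+\nu,\eta),\qquad H:\ \mathsf{Exp}(\alpha)\to\mathsf{Exp}(\lambda_h),\qquad G:\ \mathsf{Exp}(\beta)\to\mathsf{Exp}(\lambda_g),$$ where $\lambda_h:=\frac{\alpha-B(t)}{\theta(1+\nu/\gamma)^{-\eta}\frac{\beta}{\beta-B(t)}}$ and $\lambda_g:=\frac{\beta-B(t)}{\theta(1+\nu/\gamma)^{-\eta}\frac{\beta}{\beta-B(t)}}$ (Gamma parametrized by rate then shape; Exp by rate).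
   Context: Setting: complete filtered probability space $(\Omega,\mathcal F,\mathbb F,\mathbb P)$, horizon $[0,T]$. $M_t$ is a Poisson process with constant rate $\rho>0$, jump times $T_{1,i}$, i.i.d. positive marks $X_i\sim H$. $N_t=\sum_j\mathbb I_{\{T_{2,j}\le t\}}$ has intensity $\lambda_t=a+(\lambda_0-a)\mathrm e^{-\delta t}+\sum_iX_i\mathrm e^{-\delta(t-T_{1,i})}\mathbb I_{\{T_{1,i}\le t\}}+\sum_jY_j\mathrm e^{-\delta(t-T_{2,j})}\mathbb I_{\{T_{2,j}\le t\}}$ (constants $\lambda_0>0,a\ge0,\delta>0$; i.i.d. $Y_j\sim G$); $C_t=\sum_j\Xi_j\mathbb I_{\{T_{2,j}\le t\}}$, i.i.d. $\Xi_j\sim J$; all independent; $\Lambda_t=\int_0^t\lambda_u\mathrm du$. Laplace transforms $\hat g(s)=\int\mathrm e^{-sy}\mathrm dG$ etc. Parameters $\theta,\psi\ge1$, $\nu<0$, $\phi=-(\theta\hat j(\nu)-1)$, $\delta>\theta\hat j(\nu)\mu_G$ with $\mu_G$ the mean of $G$. $B$ solves $B'-\delta B+\theta\hat j(\nu)\hat g(-B)+\phi-1=0$, $B(0)=b>0$ (with $B(t)<\alpha$, $B(t)<\beta$ so the transforms are finite); $K$ solves $K'+a\delta B+\rho[\psi\hat h(-B)-1]=0$, $K(0)=0$. $\mathbb P^*$: $\mathrm d\mathbb P^*/\mathrm d\mathbb P|_{\mathcal F_T}=\zeta_T$ with $\zeta_t=\mathrm e^{K(t)}\theta^{N_t}\mathrm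 e^{B(t)\lambda_t}\mathrm e^{-\nu C_t}\mathrm e^{\phi\Lambda_t}\psi^{M_t}$ normalized by its value at $0$. General fact used to interpret ''transformed parameters'': with $c(t)=\theta\hat j(\nu)\hat g(-B(t))$, $\tilde\lambda=c(t)\lambda$, $\tilde\Lambda=c(t)\Lambda$, the $\mathbb P^*$-generator is $\partial_t\tilde f+\tilde\lambda\partial_{\tilde\Lambda}\tilde f+\delta(c(t)a-\tilde\lambda)\partial_{\tilde\lambda}\tilde f+\tilde\lambda[\iint\tilde f(\tilde\lambda+u,n+1,c+\xi,m,\tilde\Lambda,t)\frac{\tilde g(u/c(t);t)}{c(t)}\mathrm du\,\tilde j(\xi)\mathrm d\xi-\tilde f]+\psi\hat h(-B(t))\rho[\int\tilde f(\tilde\lambda+v,n,c,m+1,\tilde\Lambda,t)\frac{\tilde h(v/c(t);t)}{c(t)}\mathrm dv-\tilde f]$, where $\tilde g(y;t)=\frac{\mathrm e^{B(t)y}}{\hat g(-B(t))}g(y)$, $\tilde h(x;t)=\frac{\mathrm e^{B(t)x}}{\hat h(-B(t))}h(x)$, $\tilde j(\xi)=\frac{\mathrm e^{-\nu\xi}}{\hat j(\nu)}j(\xi)$. *)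

(* Defs.v *)
From HB Require Import structures.
From mathcomp Require Import all_boot all_order all_algebra.
From mathcomp Require Import all_classical all_reals all_analysis.
Set Implicit Arguments. Unset Strict Implicit. Unset Printing Implicit Defensive.
Import Order.TTheory GRing.Theory Num.Theory.
Import numFieldNormedType.Exports.
Local Open Scope classical_set_scope.
Local Open Scope ring_scope.

Section DCP.
Variable R : realType.

(* Lebesgue integral over the positive half-line (marks are positive). *)
Definition Lint (f : R -> R) : R :=
  Rintegral (@lebesgue_measure R) `]0%R, +oo[%classic f.

Definition exp_pdf (r : R) (x : R) : R := r * expR (- (r * x)).

Definition gamma_pdf (r : R) (k : nat) (x : R) : R :=
  r ^+ k * x ^+ k.-1 * expR (- (r * x)) / (k.-1)`!%:R.

Definition laplace (dens : R -> R) (s : R) : R :=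
  Lint (fun y => expR (- (s * y)) * dens y).

Definition mean (dens : R -> R) : R := Lint (fun y => y * dens y).

(* state functions f(lambda, n, c, m, Lambda, t) *)
Definition stfun := R -> nat -> R -> nat -> R -> R -> R.

(* Generator of a dynamic contagion process (N, C, M, lambda, Lambda) with
   (possibly time-dependent) base level a, decay delta, external jump rate rho,
   self-excited jump density g, external jump density h, claim density j. *)
Definition DCP_gen (a rho delta : R) (g h j : R -> R) (f : stfun)
    (lam : R) (n : nat) (c : R) (m : nat) (Lam t : R) : R :=
  derive1 (fun s => f lam n c m Lam s) t
  + lam * derive1 (fun L => f lam n c m L t) Lam
  + delta * (a - lam) * derive1 (fun l => f l n c m Lam t) lam
  + lam * (Lint (fun xi => Lint (fun u => f (lam + u) n.+1 (c + xi) m Lam t * g u) * j xi)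
           - f lam n c m Lam t)
  + rho * (Lint (fun v => f (lam + v) n c m.+1 Lam t * h v) - f lam n c m Lam t).

Definition tilde_g (B : R -> R) (g : R -> R) (t y : R) : R :=
  expR (B t * y) / laplace g (- B t) * g y.
Definition tilde_h (B : R -> R) (h : R -> R) (t x : R) : R :=
  expR (B t * x) / laplace h (- B t) * h x.
Definition tilde_j (nu : R) (j : R -> R) (xi : R) : R :=
  expR (- (nu * xi)) / laplace j nu * j xi.

Definition cfun (theta nu : R) (B : R -> R) (g j : R -> R) (t : R) : R :=
  theta * laplace j nu * laplace g (- B t).

(* The P*-generator, written exactly as in the "general fact" of the context,
   acting on functions of (lambda~, n, c, m, Lambda~, t). *)
Definition Pstar_gen (theta psi nu rho a delta : R) (B : R -> R) (g h j : R -> R)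
    (f : stfun) (lam : R) (n : nat) (c : R) (m : nat) (Lam t : R) : R :=
  let ct := cfun theta nu B g j t in
  derive1 (fun s => f lam n c m Lam s) t
  + lam * derive1 (fun L => f lam n c m L t) Lam
  + delta * (ct * a - lam) * derive1 (fun l => f l n c m Lam t) lam
  + lam * (Lint (fun xi => Lint (fun u => f (lam + u) n.+1 (c + xi) m Lam t
                                            * (tilde_g B g t (u / ct) / ct))
                            * tilde_j nu j xi)
           - f lam n c m Lam t)
  + psi * laplace h (- B t) * rho
      * (Lint (fun v => f (lam + v) n c m.+1 Lam t * (tilde_h B h t (v / ct) / ct))
         - f lam n c m Lam t).

End DCP.

(* Main.v *)
Require Import Defs.
From HB Require Import structures.
From mathcomp Require Import all_boot all_order all_algebra.
From mathcomp Require Import all_classical all_reals all_analysis.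
From mathcomp Require Import ring lra measurable_realfun.
Import Order.TTheory GRing.Theory Num.Theory.
Import numFieldNormedType.Exports.
Local Open Scope classical_set_scope.
Local Open Scope ring_scope.

Section K.
Variable R : realType.
Implicit Types r x : R.

Lemma dE r x : is_derive x 1 (fun y : R => expR (- (r * y))) (- r * expR (- (r * x))).
Proof.
have h1 : is_derive x 1 (fun y : R => - (r * y)) (- r).
  have := @is_deriveN _ R R (fun y : R => r * y) x 1 r.
  apply; have := @is_deriveZ _ R R id r x 1 1 (is_derive_id _ _).
  by rewrite /GRing.scale /= mulr1.
have := @is_derive1_comp R expR (fun y => - (r * y)) x _ _ (is_derive_expR (- (r * x))) h1.
by rewrite mulrC.
Qed.

Fixpoint G r (k : nat) : R -> R :=
  match k with
  | 0 => fun x => - expR (- (r * x)) / r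
  | k'.+1 => fun x => - (x ^+ k'.+1 * expR (- (r * x))) / r + k'.+1%:R / r * G r k' x
  end.

Lemma conv_der (f g : R -> R) x df dg : f = g -> df = dg ->
  is_derive x 1 f df -> is_derive x 1 g dg.
Proof. by move=> -> ->. Qed.

Lemma dG r k x : r != 0 -> is_derive x 1 (G r k) (x ^+ k * expR (- (r * x))).
Proof.
move=> r0; elim: k => [|k IH].
  have H := (is_deriveZ (- r^-1) (dE r x)). eapply conv_der; last exact H.
    apply/funext => y /=. rewrite -[_ *: _]/(_ * _). by rewrite !mulNr mulrC.
  by rewrite -[_ *: _]/(_ * _) expr0 mul1r; field.
have dX := @is_deriveX R _ (fun y : R => y) k.+1 x 1 1 (is_derive_id _ _).
have dM := is_deriveM dX (dE r x).
have := is_deriveD (is_deriveZ (- r^-1) dM) (is_deriveZ (k.+1%:R / r) IH).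
apply: conv_der.
  apply/funext => y; rewrite exprfctE.
  change ((- r^-1) * (y ^+ k.+1 * expR (- (r * y))) + k.+1%:R / r * G r k y = 
    - (y ^+ k.+1 * expR (- (r * y))) / r + k.+1%:R / r * G r k y).
  by field.
rewrite exprfctE /= -![_ *: _]/(_ * _).
by field.
Qed.

Lemma bound_pe r k x : 0 < r -> 0 < x ->
  0 <= x ^+ k * expR (- (r * x)) <= k.+1`!%:R / r ^+ k.+1 * x^-1.
Proof.
move=> r0 x0; apply/andP; split; first by rewrite mulr_ge0 ?exprn_ge0 ?expR_ge0 // ltW.
have e0 := expR_gt0 (r * x).
have F0 : (0 < k.+1`!%:R :> R) by rewrite ltr0n fact_gt0.
have Q0 : 0 < r ^+ k.+1 by rewrite exprn_gt0.
have H := expR_ge1Dxn k (ltW (mulr_gt0 r0 x0)).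
rewrite exprMn in H.
have H1 : r ^+ k.+1 * x ^+ k.+1 / k.+1`!%:R <= expR (r * x).
  apply: (le_trans _ H); lra.
rewrite ler_pdivrMr // in H1.
have H2 : r ^+ k.+1 * (x ^+ k * x) <= k.+1`!%:R * expR (r * x).
  by rewrite -exprSr (mulrC (k.+1`!%:R)).
rewrite expRN.
have -> : x ^+ k * (expR (r * x))^-1
   = (r ^+ k.+1 * (x ^+ k * x)) * (x * r ^+ k.+1 * expR (r * x))^-1.
  by field; rewrite (gt_eqF e0) (gt_eqF Q0) (gt_eqF x0).
have -> : k.+1`!%:R / r ^+ k.+1 * x^-1
   = (k.+1`!%:R * expR (r * x)) * (x * r ^+ k.+1 * expR (r * x))^-1.
  by field; rewrite (gt_eqF e0) (gt_eqF Q0) (gt_eqF x0).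
apply: ler_wpM2r => //.
by rewrite invr_ge0 ?mulr_ge0 // ltW.
Qed.

Lemma lim_pe r k : 0 < r ->
  (fun x => x ^+ k * expR (- (r * x))) x @[x --> +oo] --> (0 : R).
Proof.
move=> r0.
apply: (@squeeze_cvgr _ _ _ _ (fun=> 0) (fun x => k.+1`!%:R / r ^+ k.+1 * x^-1)).
  near=> x; apply: bound_pe => //; near: x; exact: nbhs_pinfty_gt.
  exact: cvg_cst.
rewrite -(mulr0 (k.+1`!%:R / r ^+ k.+1)).
apply: cvgMr.
have := (@gtr0_cvgV0 R R (pinfty_nbhs R) _ id).
move=> /(_ _) [].
  near=> x; near: x; exact: nbhs_pinfty_gt.
move=> _; apply; exact: cvg_id.
Unshelve. all: end_near.
Qed.

Lemma cvgMc (c : R) {f : R -> R} {l} : f x @[x --> +oo] --> l ->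
  (fun x => c * f x) x @[x --> +oo] --> c * l.
Proof. move=> H; exact: cvgMr. Qed.

Lemma limG r k : 0 < r -> G r k x @[x --> +oo] --> (0 : R).
Proof.
move=> r0; have rn0 : r != 0 by rewrite gt_eqF.
elim: k => [|k IH].
  have -> : (fun x => G r 0 x) = (fun x => (- r^-1) * (x ^+ 0 * expR (- (r * x)))).
    by apply/funext => x /=; rewrite expr0 mul1r mulNr mulrC mulNr.
  rewrite -(mulr0 (- r^-1)); apply: cvgMr; exact: lim_pe.
have H := cvgD (cvgMc (- r^-1) (@lim_pe r k.+1 r0)) (cvgMc (k.+1%:R / r) IH).
rewrite !mulr0 addr0 in H.
have -> : (fun x => G r k.+1 x) = ((fun x => (- r^-1) * (x ^+ k.+1 * expR (- (r * x))))
    + (fun x => k.+1%:R / r * G r k x)).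
  by apply/funext => x; rewrite addrfctE /=; field.
apply: H.
Qed.

Lemma G0 r k : r != 0 -> G r k 0 = - (k`!%:R / r ^+ k.+1).
Proof.
move=> rn0; elim: k => [|k IH] /=.
  by rewrite mulr0 oppr0 expR0 fact0 expr1 mulNr.
rewrite IH expr0n /= mul0r oppr0 mul0r add0r factS natrM.
by rewrite [r ^+ k.+2]exprS; field; rewrite expf_neq0 // rn0.
Qed.

Lemma dPE r k x : is_derive x 1 (fun y : R => y ^+ k * expR (- (r * y)))
  ((k%:R * x ^+ k.-1) * expR (- (r * x)) + x ^+ k * (- r * expR (- (r * x)))).
Proof.
have dX := @is_deriveX R _ (fun y : R => y) k x 1 1 (is_derive_id _ _).
have dM := is_deriveM dX (dE r x).
eapply conv_der; last exact dM.
  by apply/funext => y; rewrite exprfctE.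
rewrite exprfctE /= -![_ *: _]/(_ * _); rewrite mulr1; ring.
Qed.

Lemma cont_pe r k : continuous (fun y : R => y ^+ k * expR (- (r * y))).
Proof.
move=> x; apply: differentiable_continuous; apply/derivable1_diffP.
exact: (@ex_derive _ _ _ _ _ _ _ (dPE r k x)).
Qed.

Lemma int_pe (C r : R) k : 0 <= C -> 0 < r ->
  Lint (fun x => C * (x ^+ k * expR (- (r * x)))) = C * (k`!%:R / r ^+ k.+1).
Proof.
move=> C0 r0; have rn0 : r != 0 by rewrite gt_eqF.
have cf : continuous (fun x : R => C * (x ^+ k * expR (- (r * x)))).
  move=> x; apply: differentiable_continuous; apply/derivable1_diffP.
  exact: (@ex_derive _ _ _ _ _ _ _ (is_deriveZ C (dPE r k x))).
have dF x : is_derive x 1 (fun y => C * G r k y) (C * (x ^+ k * expR (- (r * x)))).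
  eapply conv_der; last exact (is_deriveZ C (@dG r k x rn0)); first by []. by [].
have cF : continuous (fun y => C * G r k y).
  move=> x; apply: differentiable_continuous; apply/derivable1_diffP.
  exact: (@ex_derive _ _ _ _ _ _ _ (dF x)).
rewrite /Lint /Rintegral integral_itv_obnd_cbnd; last first.
  apply/measurable_EFinP; apply: measurable_funTS.
  exact: continuous_measurable_fun.
rewrite (@ge0_continuous_FTC2y _ _ (fun y => C * G r k y) 0 0).
- rewrite -EFinB /= G0 // sub0r mulrN opprK //.
- by move=> x x0; rewrite mulr_ge0 // mulr_ge0 ?exprn_ge0 ?expR_ge0.
- exact: continuous_subspaceT.
- by have := cvgMc C (@limG r k r0); rewrite mulr0.
- by move=> x _; exact: (@ex_derive _ _ _ _ _ _ _ (dF x)).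
- exact: cvg_at_right_filter (cF 0).
- by move=> x _; rewrite derive1E; exact: (@derive_val _ _ _ _ _ _ _ (dF x)).
Qed.

Lemma lap_exp (r s : R) : 0 <= r -> 0 < r + s ->
  laplace (exp_pdf r) s = r / (r + s).
Proof.
move=> r0 rs0; rewrite /laplace /exp_pdf.
have -> : (fun y => expR (- (s * y)) * (r * expR (- (r * y))))
    = (fun y => r * (y ^+ 0 * expR (- ((r + s) * y)))).
  apply/funext => y; rewrite expr0 mul1r mulrCA -expRD; congr (r * expR _); ring.
by rewrite int_pe // fact0 expr1 mul1r.
Qed.

Lemma lap_gamma (g n : R) k : 0 < g -> 0 < g + n -> (1 <= k)%N ->
  laplace (gamma_pdf g k) n = g ^+ k / (g + n) ^+ k.
Proof.
move=> g0 gn0; case: k => [//|k] _; rewrite /laplace /gamma_pdf /=.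
have F0 : (0 < k`!%:R :> R) by rewrite ltr0n fact_gt0.
have -> : (fun y => expR (- (n * y)) * (g ^+ k.+1 * y ^+ k * expR (- (g * y)) / k`!%:R))
    = (fun y => (g ^+ k.+1 / k`!%:R) * (y ^+ k * expR (- ((g + n) * y)))).
  apply/funext => y.
  have -> : expR (- ((g + n) * y)) = expR (- (n * y)) * expR (- (g * y)).
    by rewrite -expRD; congr expR; ring.
  by field; rewrite gt_eqF.
rewrite int_pe //; last by rewrite divr_ge0 // ?exprn_ge0 // ltW.
by field; rewrite expf_neq0 ?gt_eqF.
Qed.
End K.

Theorem corollary3 (R : realType)
  (T lambda0 a delta rho alpha beta gamma : R) (eta : nat)
  (theta psi nu b : R) (B : R -> R)
  (hT : 0 < T) (hl0 : 0 < lambda0) (ha : 0 <= a) (hdelta : 0 < delta)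
  (hrho : 0 < rho) (halpha : 0 < alpha) (hbeta : 0 < beta) (hgamma : 0 < gamma)
  (heta : (1 <= eta)%N) (htheta : 1 <= theta) (hpsi : 1 <= psi)
  (hnu : - gamma < nu) (hnu0 : nu < 0)
  (hstab : theta * laplace (gamma_pdf gamma eta) nu * mean (exp_pdf beta) < delta)
  (hb : 0 < b) (hB0 : B 0 = b)
  (hBode : forall t, 0 <= t <= T ->
     derivable B t 1 /\
     derive1 B t - delta * B t
       + theta * laplace (gamma_pdf gamma eta) nu * laplace (exp_pdf beta) (- B t)
       + (- (theta * laplace (gamma_pdf gamma eta) nu - 1)) - 1 = 0)
  (hBa : forall t, 0 <= t <= T -> B t < alpha)
  (hBb : forall t, 0 <= t <= T -> B t < beta) :
  forall (f : stfun R) (lam : R) (n : nat) (c : R) (m : nat) (Lam t : R),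
    0 <= t <= T ->
    let ct := theta * (1 + nu / gamma) ^- eta * (beta / (beta - B t)) in
    let lam_h := (alpha - B t) / ct in
    let lam_g := (beta - B t) / ct in
    Pstar_gen theta psi nu rho a delta B (exp_pdf beta) (exp_pdf alpha)
      (gamma_pdf gamma eta) f lam n c m Lam t
    = DCP_gen (ct * a) (psi * (alpha / (alpha - B t)) * rho) delta
        (exp_pdf lam_g) (exp_pdf lam_h) (gamma_pdf (gamma + nu) eta)
        f lam n c m Lam t.
Proof.
move=> f lam n c m Lam t ht ct lam_h lam_g.
have Bb := hBb t ht; have Ba := hBa t ht.
have bB0 : 0 < beta - B t by rewrite subr_gt0.
have aB0 : 0 < alpha - B t by rewrite subr_gt0.
have gn0 : 0 < gamma + nu by lra.
have Lg : laplace (exp_pdf beta) (- B t) = beta / (beta - B t).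
  by rewrite lap_exp // ltW.
have Lh : laplace (exp_pdf alpha) (- B t) = alpha / (alpha - B t).
  by rewrite lap_exp // ltW.
have Lj : laplace (gamma_pdf gamma eta) nu = gamma ^+ eta / (gamma + nu) ^+ eta.
  by rewrite lap_gamma.
have Pj : (1 + nu / gamma) ^- eta = gamma ^+ eta / (gamma + nu) ^+ eta.
  rewrite -exprVn; have -> : (1 + nu / gamma)^-1 = gamma / (gamma + nu).
    by field; rewrite !gt_eqF.
  by rewrite expr_div_n.
have th0 : 0 < theta by apply: (lt_le_trans ltr01).
have ctp : 0 < ct.
  rewrite /ct Pj; apply: mulr_gt0; first apply: mulr_gt0 => //.
    by apply: divr_gt0; apply: exprn_gt0.
  exact: divr_gt0.
have ct0 : ct != 0 by rewrite gt_eqF.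
have ctE : cfun theta nu B (exp_pdf beta) (gamma_pdf gamma eta) t = ct.
  by rewrite /cfun Lj Lg /ct Pj.
have Eg u : tilde_g B (exp_pdf beta) t (u / ct) / ct = exp_pdf lam_g u.
  rewrite /tilde_g Lg /exp_pdf /lam_g.
  have -> : expR (- ((beta - B t) / ct * u)) = expR (B t * (u / ct)) * expR (- (beta * (u / ct))).
    by rewrite -expRD; congr expR; field.
  by field; rewrite !gt_eqF.
have Eh u : tilde_h B (exp_pdf alpha) t (u / ct) / ct = exp_pdf lam_h u.
  rewrite /tilde_h Lh /exp_pdf /lam_h.
  have -> : expR (- ((alpha - B t) / ct * u)) = expR (B t * (u / ct)) * expR (- (alpha * (u / ct))).
    by rewrite -expRD; congr expR; field.
  by field; rewrite !gt_eqF.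
have Ej xi : tilde_j nu (gamma_pdf gamma eta) xi = gamma_pdf (gamma + nu) eta xi.
  rewrite /tilde_j Lj /gamma_pdf.
  have -> : expR (- ((gamma + nu) * xi)) = expR (- (nu * xi)) * expR (- (gamma * xi)).
    by rewrite -expRD; congr expR; ring.
  have F0 : (0 < (eta.-1)`!%:R :> R) by rewrite ltr0n fact_gt0.
  by field; rewrite ?expf_neq0 ?gt_eqF.
rewrite /Pstar_gen /DCP_gen /= ctE Lh.
congr (_ + _ + _ + lam * (Lint _ - _) + _ * (Lint _ - _)).
  apply/funext => xi; rewrite Ej; congr (Lint _ * _).
  by apply/funext => u; rewrite Eg.
by apply/funext => v; rewrite Eh.
Qed.
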